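(* Let $\mathcal{C}$ be a full reflective subcategory of $\mathsf{Top}$ which is contained in the category $\mathsf{Top}_0$ of T$_0$-spaces and contains all compact metrizable spaces. Then the empty space is the only finitely presentable object of $\mathcal{C}$.
   Context: An object $X$ of a category $\mathcal{C}$ is finitely presentable if for every directed diagram $(Z_i)_{i\in I}$ in $\mathcal{C}$ (indexed by a directed poset $I$, i.e. every finite subset has an upper bound), with connecting morphisms $z_{i,j}$ and colimit cocone $c_i:Z_i\to Z$ in $\mathcal{C}$, every morphism $f:X\to Z$ factorizes essentially uniquely through some $c_i$: (i) there are $i$ and $g:X\to Z_i$ with $f=c_i\cdot g$, and (ii) whenever $g':X\to Z_i$ also satisfies $f=c_i\cdot g'$, some connecting morphism $z_{i,j}$ satisfies $z_{i,j}\cdot g=z_{i,j}\cdot g'$. *)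

(* Defs.v *)
From HB Require Import structures.
From mathcomp Require Import all_boot all_order all_algebra.
From mathcomp Require Import all_classical all_reals all_analysis.
From mathcomp Require Import Rstruct Rstruct_topology.
Set Implicit Arguments. Unset Strict Implicit. Unset Printing Implicit Defensive.
Import Order.TTheory GRing.Theory Num.Theory.
Local Open Scope classical_set_scope.
Local Open Scope ring_scope.

Definition metrizable_space (T : topologicalType) : Prop :=
  exists d : T -> T -> Rdefinitions.R,
    [/\ (forall x y, 0 <= d x y),
        (forall x y, d x y = 0 <-> x = y),
        (forall x y, d x y = d y x),
        (forall x y z, d x z <= d x y + d y z) &
        (forall A : set T, open A <->
           (forall x, A x -> exists2 e, 0 < e & forall y, d x y < e -> A y))].

(* A full subcategory of Top is given by a class of spaces [C]; its morphisms
   are all continuous maps between members of [C]. *)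
Definition reflective_in_Top (C : topologicalType -> Prop) : Prop :=
  forall X : topologicalType,
    exists (RX : topologicalType) (eta : X -> RX),
      [/\ C RX, continuous eta &
        forall (Y : topologicalType) (f : X -> Y), C Y -> continuous f ->
          exists g : RX -> Y, (continuous g /\ f = g \o eta) /\
            forall g' : RX -> Y, continuous g' -> f = g' \o eta -> g' = g].

Definition directed_poset (I : Type) (le : I -> I -> Prop) : Prop :=
  [/\ (forall i, le i i),
      (forall i j, le i j -> le j i -> i = j),
      (forall i j k, le i j -> le j k -> le i k) &
      (forall s : list I, exists j, forall i, List.In i s -> le i j)].

Definition diagram_in (C : topologicalType -> Prop) (I : Type) (le : I -> I -> Prop)
  (Z : I -> topologicalType) (z : forall i j, le i j -> Z i -> Z j) : Prop :=
  [/\ (forall i, C (Z i)),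
      (forall i j (p : le i j), continuous (z i j p)),
      (forall i (p : le i i), z i i p = id) &
      (forall i j k (p : le i j) (q : le j k) (r : le i k),
          z i k r = z j k q \o z i j p)].

Definition is_cocone (I : Type) (le : I -> I -> Prop)
  (Z : I -> topologicalType) (z : forall i j, le i j -> Z i -> Z j)
  (W : topologicalType) (w : forall i, Z i -> W) : Prop :=
  (forall i, continuous (w i)) /\
  (forall i j (p : le i j), w j \o z i j p = w i).

Definition is_colimit_in (C : topologicalType -> Prop) (I : Type) (le : I -> I -> Prop)
  (Z : I -> topologicalType) (z : forall i j, le i j -> Z i -> Z j)
  (Zc : topologicalType) (c : forall i, Z i -> Zc) : Prop :=
  [/\ C Zc, is_cocone z c &
    forall (W : topologicalType) (w : forall i, Z i -> W), C W -> is_cocone z w ->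
      exists h : Zc -> W, (continuous h /\ forall i, h \o c i = w i) /\
        forall h' : Zc -> W, continuous h' -> (forall i, h' \o c i = w i) -> h' = h].

Definition finitely_presentable_in (C : topologicalType -> Prop) (X : topologicalType) : Prop :=
  forall (I : Type) (le : I -> I -> Prop) (Z : I -> topologicalType)
         (z : forall i j, le i j -> Z i -> Z j)
         (Zc : topologicalType) (c : forall i, Z i -> Zc),
    directed_poset le -> diagram_in C z -> is_colimit_in C z c ->
    forall f : X -> Zc, continuous f ->
      (exists i (g : X -> Z i), continuous g /\ f = c i \o g) /\
      (forall i (g g' : X -> Z i), continuous g -> continuous g' ->
          f = c i \o g -> f = c i \o g' ->
          exists j (p : le i j), z i j p \o g = z i j p \o g').

(* Main.v *)
Require Import Defs.
From HB Require Import structures.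
From mathcomp Require Import all_boot all_order all_algebra.
From mathcomp Require Import all_classical all_reals all_analysis.
From mathcomp Require Import Rstruct Rstruct_topology.
From mathcomp Require Import ring lra.
Set Implicit Arguments. Unset Strict Implicit. Unset Printing Implicit Defensive.
Import Order.TTheory GRing.Theory Num.Theory.
Local Open Scope classical_set_scope.
Local Open Scope ring_scope.
Notation RR := Rdefinitions.R.
Definition gw (m : nat) : RR := (m%:R)^-1.

Lemma gw_ge0 m : 0 <= gw m.
Proof. by rewrite /gw invr_ge0 ler0n. Qed.
Lemma gw_le1 m : gw m <= 1.
Proof.
case: m => [|m]; first by rewrite /gw invr0.
by rewrite /gw invf_le1 ?ltr0Sn // ler1n.
Qed.
Lemma gw_eq0 m : gw m = 0 -> m = 0%N.
Proof. by move/eqP; rewrite /gw invr_eq0 pnatr_eq0 => /eqP. Qed.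

Definition Zsp : Type := (bool * nat)%type.
HB.instance Definition _ := Choice.on Zsp.

Definition zd (x y : Zsp) : RR :=
  if x == y then 0 else if x.1 == y.1 then Num.max (gw x.2) (gw y.2) else 1.

Lemma zd_ge_gw x y : x != y -> gw x.2 <= zd x y.
Proof.
move=> /negbTE xy; rewrite /zd xy; case: ifP => _; last exact: gw_le1.
by rewrite le_max lexx.
Qed.

Lemma zdxx x : zd x x = 0. Proof. by rewrite /zd eqxx. Qed.
Lemma zd_pos x y : zd x y = 0 -> x = y.
Proof.
rewrite /zd; case: eqP => // _; case: eqP => [e1|_]; last first.
  by move/eqP; rewrite oner_eq0.
move=> hm.
have h1 : gw x.2 = 0.
  by apply/eqP; rewrite eq_le gw_ge0 andbT -hm le_max lexx.
have h2 : gw y.2 = 0.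
  by apply/eqP; rewrite eq_le gw_ge0 andbT -hm le_max lexx orbT.
move: x y e1 h1 h2 {hm} => [a m] [b n] /= -> /gw_eq0 -> /gw_eq0 -> //.
Qed.
Lemma zd_sym x y : zd x y = zd y x.
Proof. by rewrite /zd eq_sym [y.1 == _]eq_sym maxC. Qed.
Lemma zd_tri y x z : zd x z <= zd x y + zd y z.
Proof.
have g0 := gw_ge0; have g1 := gw_le1.
have d0 : forall a b, 0 <= zd a b.
  move=> a b; rewrite /zd; case: ifP => // _; case: ifP => // _.
  by rewrite le_max g0.
case: (eqVneq x z) => [->|xz]; first by rewrite zdxx addr_ge0.
case: (eqVneq y x) => [->|yx]; first by rewrite zdxx add0r.
case: (eqVneq y z) => [->|yz]; first by rewrite zdxx addr0.
rewrite eq_sym in yx.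
have hx := zd_ge_gw yx.
rewrite eq_sym in yz.
have hz : gw z.2 <= zd y z by rewrite zd_sym; apply: zd_ge_gw.
rewrite {1}/zd (negbTE xz); case: ifP => e.
  rewrite ge_max; apply/andP; split.
    by apply: le_trans hx _; rewrite lerDl d0.
  by apply: le_trans hz _; rewrite lerDr d0.
have : (x.1 != y.1) || (y.1 != z.1).
  by move: e; case: x.1; case: y.1; case: z.1.
case/orP => e'.
  by rewrite {1}/zd (negbTE yx) (negbTE e') lerDl d0.
by rewrite eq_sym in yz; rewrite {2}/zd (negbTE yz) (negbTE e') lerDr d0.
Qed.

HB.instance Definition _ := @isMetric.Build RR Zsp zd zdxx zd_pos zd_sym zd_tri.

Lemma mdistE (x y : Zsp) : mdist x y = zd x y. Proof. by []. Qed.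
Lemma nbhs_metricP (T : metricType RR) (x : T) (P : set T) :
  nbhs x P <-> exists2 e : RR, 0 < e & forall y, mdist x y < e -> P y.
Proof.
rewrite -metricType_numDomainType.filter_from_mdist_nbhs; split.
  by move=> [e e0 h]; exists e => // y hy; apply: h.
by move=> [e e0 h]; exists e => // y hy; apply: h.
Qed.

Lemma metric_metrizable (T : metricType RR) : metrizable_space T.
Proof.
exists (@mdist RR T); split.
- exact: mdist_ge0.
- by move=> x y; split; [exact: mdist_positivity| move=> ->; exact: mdistxx].
- exact: metric_sym.
- by move=> x y z; exact: metric_triangle.
- move=> A; rewrite openE; split.
    by move=> h x /h /nbhs_metricP.
  by move=> h x /h /nbhs_metricP.
Qed.

Lemma gw_gt0 k : 0 < gw k.+1.
Proof. by rewrite /gw invr_gt0 ltr0Sn. Qed.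

Lemma gw_anti m n : (0 < m)%N -> (m <= n)%N -> gw n <= gw m.
Proof.
move=> m0 mn; rewrite /gw lef_pV2 ?posrE ?ltr0n ?ler_nat //.
exact: leq_trans mn.
Qed.

Lemma arch_gw (e : RR) : 0 < e -> gw (Num.truncn e^-1).+1 < e.
Proof.
move=> e0; rewrite /gw -[e in _ < e]invrK ltf_pV2 ?posrE ?invr_gt0 ?ltr0Sn //.
exact: truncnS_gt.
Qed.

Lemma zd_limit s m : zd (s, 0%N) (s, m) = gw m.
Proof.
rewrite /zd /= eqxx; case: m => [|m]; first by rewrite eqxx /gw invr0.
rewrite xpair_eqE eqxx /= /gw invr0; apply/max_idPr.
by rewrite invr_ge0 ler0n.
Qed.

Lemma gw2 k : gw k.+1 <= 2 * gw k.+2.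
Proof.
rewrite /gw; set a : RR := k.+1%:R.
have a1 : 1 <= a by rewrite /a ler1n.
have -> : (k.+2%:R : RR) = a + 1 by rewrite /a -natr1.
have a0 : 0 < a by lra.
rewrite -(ler_pM2r (mulr_gt0 a0 (ltr_wpDl (ltW a0) ltr01))).
have -> : a^-1 * (a * (a+1)) = a + 1 by field; lra.
have -> : 2 * (a + 1)^-1 * (a * (a+1)) = 2 * a by field; lra.
lra.
Qed.

Lemma Zsp_compact : compact [set: Zsp].
Proof.
move=> F PF _; apply: contrapT => hne.
have h (z : Zsp) : exists Q : set Zsp, F Q /\ exists2 N, nbhs z N & (forall y, Q y -> N y -> False).
  apply: contrapT => hn; apply: hne; exists z; split => //.
  move=> A B FA NB; apply: contrapT => hAB; apply: hn; exists A; split => //.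
  by exists B => // y Ay By; apply: hAB; exists y.
have [Q hQ] := choice h.
have hM s : exists M, forall m, (M < m)%N -> Q (s, 0%N) (s, m) -> False.
  have [_ [N /nbhs_metricP [e e0 he] dj]] := hQ (s, 0%N).
  exists (Num.truncn e^-1) => m Mm Qm; apply: (dj _ Qm); apply: he.
  rewrite mdistE zd_limit; apply: le_lt_trans (arch_gw e0).
  exact: gw_anti.
have [Mf hf] := hM false; have [Mt ht] := hM true.
pose M := maxn Mf Mt.
pose S := fun y : Zsp => forall p : bool * 'I_M.+1, Q (p.1, nat_of_ord p.2) y.
have FS : F S by apply: filter_forall => p; exact: (hQ _).1.
have [[s m] Sy] := filter_ex FS.
have [mM|Mm] := leqP m M.
  have [_ [N Nn dj]] := hQ (s, m).
  apply: (dj (s, m)); last exact: nbhs_singleton Nn.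
  exact: (Sy (s, Ordinal (mM : (m < M.+1)%N))).
have Q0 := Sy (s, ord0); rewrite /= in Q0.
case: s Q0 {Sy} => Q0.
  by apply: (ht m) => //; apply: leq_ltn_trans Mm; rewrite leq_maxr.
by apply: (hf m) => //; apply: leq_ltn_trans Mm; rewrite leq_maxl.
Qed.

Definition phi (x : Zsp) : Zsp :=
  match x with
  | (s, 0%N) => (s, 0%N)
  | (s, 1%N) => (~~ s, 0%N)
  | (s, k.+2) => (s, k.+1)
  end.

Lemma isolated s k (y : Zsp) : mdist ((s, k.+1) : Zsp) y < gw k.+1 -> y = (s, k.+1).
Proof.
move=> h; apply/eqP; rewrite eq_sym; apply: contraTT h => ne.
by rewrite -leNgt mdistE; exact: (zd_ge_gw ne).
Qed.

Lemma phi_cont : continuous phi.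
Proof.
move=> [s [|k]] V /= /nbhs_metricP [e e0 he]; apply/nbhs_metricP.
  exists (Num.min (e / 2) 1); first by rewrite lt_min ltr01 andbT divr_gt0.
  move=> [t m]; rewrite lt_min => /andP [h1 h2].
  have ts : t = s.
    apply: contrapT => ts; move: h2; rewrite mdistE /zd.
    have -> : ((s, 0%N) == (t, m)) = false.
      by apply/negbTE; rewrite xpair_eqE negb_and; apply/orP; left; apply/eqP => /esym.
    have -> : (s == t) = false by apply/negbTE/eqP => /esym.
    by rewrite ltxx.
  subst t; move: h1 h2; rewrite mdistE zd_limit.
  case: m => [|[|k]] h1 h2.
  - by apply: he; rewrite mdistE zdxx.
  - by move: h2; rewrite /gw invr1 ltxx.
  - apply: he; rewrite /= mdistE zd_limit.
    apply: le_lt_trans (gw2 k) _; lra.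
exists (gw k.+1); first exact: gw_gt0.
move=> y /isolated ->; apply: he; rewrite mdistE zdxx; exact: e0.
Qed.

Lemma iter_phi_fix s m : iter m phi (s, 0%N) = (s, 0%N).
Proof. by elim: m => //= m ->. Qed.

Lemma iter_phi_side s k : iter k.+1 phi (s, k.+1) = (~~ s, 0%N).
Proof.
elim: k => [//|k IH]; rewrite iterSr; exact: IH.
Qed.

Lemma iter_phi_cont m : continuous (iter m phi).
Proof.
elim: m => [|m IH] /=; first by move=> x; exact: cvg_id.
move=> x; apply: continuous_comp; [exact: IH | exact: phi_cont].
Qed.

Definition Pt : Type := unit.
HB.instance Definition _ := Choice.on Pt.
Definition ptd (x y : Pt) : RR := 0.
Lemma ptdxx x : ptd x x = 0. Proof. by []. Qed.
Lemma ptd_pos x y : ptd x y = 0 -> x = y. Proof. by case: x; case: y. Qed.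
Lemma ptd_sym x y : ptd x y = ptd y x. Proof. by []. Qed.
Lemma ptd_tri y x z : ptd x z <= ptd x y + ptd y z. Proof. by rewrite /ptd addr0. Qed.
HB.instance Definition _ := @isMetric.Build RR Pt ptd ptdxx ptd_pos ptd_sym ptd_tri.

Lemma Pt_compact : compact [set: Pt].
Proof.
move=> F PF _; exists tt; split => //.
move=> A B FA NB; have [a Aa] := filter_ex FA.
exists a; split => //; case: a Aa => _; exact: nbhs_singleton NB.
Qed.

Lemma key (W : topologicalType) (w : nat -> Zsp -> W) :
  kolmogorov_space W -> (forall i, continuous (w i)) ->
  (forall i j, (i <= j)%N -> w j \o iter (j - i) phi = w i) ->
  forall i y, w i y = w 0%N (false, 0%N).
Proof.
move=> T0 wc wz.
have shift i m y : w i y = w (i + m)%N (iter m phi y).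
  by rewrite -(wz i (i + m)%N (leq_addr _ _)) /= addKn.
have w0 i s : w i (s, 0%N) = w 0%N (s, 0%N).
  by rewrite (shift 0%N i) iter_phi_fix.
have wS i s k : w i (s, k.+1) = w 0%N (~~ s, 0%N).
  by rewrite (shift i k.+1) iter_phi_side w0.
have nearl s (V : set Zsp) : nbhs ((s, 0%N) : Zsp) V -> exists k, V (s, k.+1).
  move=> /nbhs_metricP [e e0 he]; exists (Num.truncn e^-1); apply: he.
  rewrite mdistE zd_limit; exact: arch_gw.
have AB : w 0%N (false, 0%N) = w 0%N (true, 0%N).
  apply/eqP; apply: contrapT => /negP ne.
  have [U [[NU nU]|[NU nU]]] := T0 _ _ ne; rewrite in_setE in NU;
    rewrite in_setE /= in nU.
  - have := wc 0%N (false, 0%N) U NU => /nearl [k Uk].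
    by apply: nU; move: Uk; rewrite /= wS.
  - have := wc 0%N (true, 0%N) U NU => /nearl [k Uk].
    by apply: nU; move: Uk; rewrite /= wS.
move=> i [s [|k]]; first by rewrite w0; case: s.
by rewrite wS; case: s.
Qed.

Unset Implicit Arguments.
Theorem theorem3p4 (C : topologicalType -> Prop) :
  reflective_in_Top C ->
  (forall X : topologicalType, C X -> @kolmogorov_space X) ->
  (forall X : topologicalType, compact [set: X] -> metrizable_space X -> C X) ->
  forall X : topologicalType, C X ->
    (finitely_presentable_in C X <-> (X -> False)).
Proof.
move=> _ hT0 hcm X _; split; last first.
  move=> hX I le Z z Zc c [drefl _ _ dub] _ _ f _; split.
    have [j _] := dub nil.
    exists j, (fun x => match hX x with end); split.
      by move=> x; case: (hX x).
    by apply/funext => x; case: (hX x).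
  move=> i g g' _ _ _ _; exists i, (drefl i).
  by apply/funext => x; case: (hX x).
move=> fp x0.
pose le := fun i j : nat => ((i <= j)%N : Prop).
pose Z := fun _ : nat => (Zsp : topologicalType).
pose z := fun i j (_ : le i j) => (iter (j - i) phi : Z i -> Z j).
have CZ : C Zsp by apply: hcm; [exact: Zsp_compact | exact: metric_metrizable].
have CP : C Pt by apply: hcm; [exact: Pt_compact | exact: metric_metrizable].
have dirP : directed_poset le.
  split.
  - by move=> i; rewrite /le.
  - by move=> i j a b; apply: anti_leq; rewrite a b.
  - by move=> i j k a b; apply: leq_trans a b.
  - move=> s; exists (foldr maxn 0%N s) => i; elim: s => //= a s IH [<-|/IH h].
      exact: leq_maxl.
    by apply: leq_trans h (leq_maxr _ _).
have diagP : diagram_in C z.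
  split.
  - by [].
  - by move=> i j p; exact: iter_phi_cont.
  - by move=> i p; rewrite /z subnn.
  - move=> i j k p q r; apply/funext => y; rewrite /z /= -iterD.
    by rewrite addnBA // subnK.
have colimP : is_colimit_in C z (fun i (_ : Z i) => (tt : Pt)).
  split => //.
    by split => // i; exact: cst_continuous.
  move=> W w CW [wc wz].
  exists (fun _ => w 0%N (false, 0%N)); split.
    split; first exact: cst_continuous.
    move=> i; apply/funext => y /=; symmetry.
    by apply: (key (hT0 _ CW) wc) => i' j' p; exact: (wz i' j' p).
  move=> h' _ hh; apply/funext => u; case: u.
  by have := congr1 (fun f => f (false, 0%N)) (hh 0%N).
have fc : continuous (fun _ : X => (tt : Pt)) by move=> ?; exact: cst_continuous.
have [_ fp2] := fp nat le Z z Pt (fun i _ => tt) dirP diagP colimP _ fc.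
have gc : forall s, continuous (fun _ : X => ((s, 0%N) : Z 0%N)).
  by move=> s ?; exact: cst_continuous.
have [j [p e]] := fp2 0%N _ _ (gc false) (gc true) erefl erefl.
by have := congr1 (fun f => f x0) e; rewrite /z /= !iter_phi_fix.
Qed.
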